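(* Let $T$ be a tree of order at least $2$ with support vertices $v_1,\dots,v_s$, where $v_i$ is adjacent to exactly $\ell_i$ leaves. Then there exists an ISTDF $f$ of $T$ of weight $\gamma^{0}_{st}(T)$ such that, for every $i\in\{1,\dots,s\}$, $f$ assigns the value $1$ to at least $\lfloor \ell_i/2\rfloor$ of the leaves adjacent to $v_i$.
   Context: For a vertex $v$ of a graph $G=(V,E)$, $N(v)$ is its open neighborhood, and for $f:V\to\mathbb{R}$ and $B\subseteq V$ write $f(B)=\sum_{v\in B}f(v)$; $f(V)$ is the weight of $f$. An inverse signed total dominating function (ISTDF) of $G$ is a function $f:V\to\{-1,1\}$ such that $f(N(v))\le 0$ for every $v\in V$. The inverse signed total domination number $\gamma^{0}_{st}(G)$ is the maximum weight of an ISTDF of $G$. A leaf of a tree is a vertex of degree $1$; a support vertex is a vertex adjacent to at least one leaf. *)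

(* Defs.v *)
From mathcomp Require Import all_boot all_order all_algebra.
Set Implicit Arguments. Unset Strict Implicit. Unset Printing Implicit Defensive.
Import Order.TTheory GRing.Theory Num.Theory.

Definition simple_graph (T : finType) (e : rel T) : Prop :=
  symmetric e /\ irreflexive e.

(* Tree: connected simple graph with exactly #|T| - 1 edges
   (ordered adjacent pairs counted twice). *)
Definition is_tree (T : finType) (e : rel T) : Prop :=
  simple_graph e /\ (forall x y : T, connect e x y) /\
  #|[set p : T * T | e p.1 p.2]| = (#|T| - 1).*2.

Definition nbhd (T : finType) (e : rel T) (v : T) : {set T} := [set u | e v u].
Definition deg (T : finType) (e : rel T) (v : T) : nat := #|nbhd e v|.
Definition leaf (T : finType) (e : rel T) (v : T) : bool := deg e v == 1%N.
Definition support_vertex (T : finType) (e : rel T) (v : T) : bool :=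
  [exists u, e v u && leaf e u].
Definition leaves_at (T : finType) (e : rel T) (v : T) : {set T} :=
  [set u | e v u & leaf e u].

Local Open Scope ring_scope.

Definition fsum (T : finType) (f : T -> int) (B : {set T}) : int :=
  \sum_(u in B) f u.
Definition weight (T : finType) (f : T -> int) : int := \sum_(u : T) f u.

Definition is_ISTDF (T : finType) (e : rel T) (f : T -> int) : Prop :=
  (forall v, f v = 1 \/ f v = -1) /\ (forall v, fsum f (nbhd e v) <= 0).

(* f is an ISTDF of maximum weight, i.e. weight f = gamma^0_st *)
Definition is_max_ISTDF (T : finType) (e : rel T) (f : T -> int) : Prop :=
  is_ISTDF e f /\ forall g, is_ISTDF e g -> weight g <= weight f.

(* Main.v *)
Require Import Defs.
From mathcomp Require Import all_boot all_order all_algebra.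
From mathcomp Require Import zify.
Import Order.TTheory GRing.Theory Num.Theory.
Set Implicit Arguments. Unset Strict Implicit.

Local Open Scope ring_scope.
Section S.
Variables (T : finType) (e : rel T).

Definition fB (B : {set T}) : T -> int := fun u => if u \in B then 1%R else (-1)%R.

Lemma fsumB B A : fsum (fB B) A = ((#|A :&: B|).*2)%:Z - #|A|%:Z.
Proof.
rewrite /fsum (bigID (fun u => u \in B)) /=.

rewrite (eq_bigl (fun u => u \in A :&: B)); last by move=> u; rewrite inE.

rewrite [X in (_ + X)%R](eq_bigl (fun u => u \in A :\: B)); last by move=> u; rewrite !inE andbC.

rewrite (eq_bigr (fun _ => 1%R)); last by move=> u; rewrite inE /fB => /andP[_ ->].
rewrite [X in (_ + X)%R](eq_bigr (fun _ => (-1)%R)); last first.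
  by move=> u; rewrite inE /fB => /andP[/negbTE ->].
rewrite !sumr_const.
have H := cardsID B A.
rewrite -H mulNrn -!natz. lia.
Qed.

Lemma weightB B : weight (fB B) = ((#|B|).*2)%:Z - #|T|%:Z.
Proof.
have -> : weight (fB B) = fsum (fB B) setT.
  by rewrite /weight /fsum; apply: eq_bigl => u; rewrite inE.
by rewrite fsumB setTI cardsT.
Qed.


Lemma leaf_nb : symmetric e -> forall u v x, e v u -> leaf e u -> e x u -> x = v.
Proof.
move=> sym u v x evu /cards1P [y Hy] exu.
have: v \in nbhd e u by rewrite inE sym.
have: x \in nbhd e u by rewrite inE sym.
by rewrite Hy !inE => /eqP -> /eqP ->.
Qed.

Definition okb (B : {set T}) : bool :=
  [forall x, (#|nbhd e x :&: B|.*2 <= #|nbhd e x|)%N].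

Lemma okbP B : okb B -> is_ISTDF e (fB B).
Proof.
move=> H; split.
  by move=> v; rewrite /fB; case: (v \in B); [left|right].
by move=> v; rewrite fsumB subr_le0 lez_nat; move/forallP: H.
Qed.

End S.

Theorem lemma4p2 (T : finType) (e : rel T) :
  (2 <= #|T|)%N -> is_tree e ->
  exists f : T -> int,
    is_max_ISTDF e f /\
    forall v : T, support_vertex e v ->
      (#|leaves_at e v| ./2 <= #|[set u in leaves_at e v | f u == 1%R]|)%N.
Proof.
move=> _ [[sym irr] _].
pose n := #|T|.
pose LT := [set u | leaf e u].
pose key (B : {set T}) := (#|B| * n.+1 + #|B :&: LT|)%N.
have ok0 : okb e set0 by apply/forallP=> x; rewrite setI0 cards0.
case: (arg_maxnP key ok0) => B okB maxB.
have keybound : forall B', (#|B' :&: LT| <= n)%N by move=> B'; exact: max_card.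
have keymono : forall B', okb e B' -> (#|B'| <= #|B|)%N.
  move=> B' /maxB; rewrite /key; have:= keybound B'; have := keybound B; nia.
exists (fB B); split.
  split; first exact: okbP.
  move=> g [g1 g2].
  have eqg : forall u, g u = fB [set u | g u == 1] u.
    by move=> u; rewrite /fB inE; case: (g1 u) => ->.
  have okg : okb e [set u | g u == 1].
    apply/forallP=> x; have := g2 x.
    rewrite /fsum (eq_bigr _ (fun u _ => eqg u)) -/(fsum _ _) fsumB subr_le0 lez_nat.
    done.
  rewrite (_ : weight g = weight (fB [set u | g u == 1])); last first.
    by apply: eq_bigr => u _; exact: eqg.
  rewrite !weightB; have := keymono _ okg; lia.
move=> v _.
set L := leaves_at e v.
rewrite (_ : [set u in L | fB B u == 1] = L :&: B); last first.
  by apply/setP=> u; rewrite !inE /fB; case: (u \in B); rewrite ?andbT ?andbF.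
rewrite leqNgt; apply/negP => Hlt.
have LN : L \subset nbhd e v by apply/subsetP=> u; rewrite !inE => /andP[].
have hh := odd_double_half #|L|.
case: (boolP (L \subset B)) => [LB | /subsetPn [u uL uB]].
  by move: Hlt; rewrite (setIidPl LB); lia.
have [evu lu] : e v u /\ leaf e u by move: uL; rewrite inE => /andP.
have uonly := fun x => leaf_nb sym evu lu (x:=x).
case: (boolP [exists w, [&& e v w, ~~ leaf e w & w \in B]]) =>
   [/existsP [w /and3P [evw lw wB]] | noW].
  pose B' := u |: (B :\ w).
  have uw : u != w by apply: contraNneq lw => <-.
  have cB' : #|B'| = #|B|.
    rewrite cardsU1 !inE (negbTE uB) andbF (cardsD1 w B) wB; done.
  have cL : #|B' :&: LT| = #|B :&: LT|.+1.
    have -> : B' :&: LT = u |: (B :&: LT).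
      apply/setP => x; rewrite !inE.
      case: (eqVneq x u) => [-> | xu] //=.
      case: (eqVneq x w) => [-> | xw]; first by rewrite (negbTE lw) !andbF.
      by [].
    by rewrite cardsU1 !inE (negbTE uB).
  have okB' : okb e B'.
    apply/forallP => x; have := forallP okB x.
    case: (boolP (e x u)) => exu.
      have xv := uonly x exu; subst x.
      have -> : nbhd e v :&: B' = u |: ((nbhd e v :&: B) :\ w).
        apply/setP => y; rewrite !inE.
        case: (eqVneq y u) => [-> | yu] /=; first by rewrite evu.
        by case: (e v y); case: (y != w).
      rewrite cardsU1 !inE (negbTE uB) andbF (cardsD1 w (nbhd e v :&: B)) !inE evw wB.
      by rewrite andbF.
    move=> H; apply: leq_trans H; rewrite leq_double; apply: subset_leq_card.
    apply/subsetP => y; rewrite !inE => /andP[exy /orP[/eqP yu | /andP [_ yB]]].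
      by subst y; rewrite (negbTE exu) in exy.
    by rewrite exy yB.
  have := maxB B' okB'; rewrite /key cB' cL; lia.
pose B' := u |: B.
have cB' : #|B'| = #|B|.+1 by rewrite cardsU1 uB.
have NB : nbhd e v :&: B \subset L :&: B.
  apply/subsetP => y; rewrite !inE => /andP [evy yB].
  rewrite evy yB /= andbT.
  apply: contraNT noW => ly; apply/existsP; exists y; by rewrite evy ly yB.
have okB' : okb e B'.
  apply/forallP => x; have := forallP okB x.
  case: (boolP (e x u)) => exu.
    have xv := uonly x exu; subst x.
    have -> : nbhd e v :&: B' = u |: (nbhd e v :&: B).
      apply/setP => y; rewrite !inE.
      case: (eqVneq y u) => [-> | yu] //=; first by rewrite evu.
    rewrite cardsU1 !inE (negbTE uB) andbF /= => _.
    have := subset_leq_card NB; have := subset_leq_card LN; lia.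
  have -> : nbhd e x :&: B' = nbhd e x :&: B.
    apply/setP => y; rewrite !inE.
    case: (eqVneq y u) => [-> | yu] //=; by rewrite (negbTE exu).
  done.
have := maxB B' okB'; rewrite /key cB'; have := keybound B; have := keybound B'; nia.
Qed.
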